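(* Let $T$ be a path forest of order $m^2$ that is impossibly burnable. Then the burning number of $T$ is greater than $m$; that is, $T$ is not well-burnable.
   Context: Graph burning on a finite simple graph $G$: initially all vertices are unburned. In each round $t\ge1$, first every unburned neighbour of a vertex that was burned by the end of round $t-1$ becomes burned, and a burning source is placed on (and burns) one unburned vertex; burned vertices stay burned. The burning number of $G$ is the least number of rounds after which all vertices are burned. A graph of order $N$ is well-burnable if its burning number is at most $\lceil\sqrt N\rceil$. A path forest is a disjoint union of paths, represented by the tuple $(l_1,\dots,l_n)$ of path orders. For $m\in\mathbb{N}$ and an integer $1\le l\le m^2$, let $B_m(l)$ be the least positive integer $t$ with $t\equiv l\pmod 2$ such that $l\le 2mt-t^2$. A path forest $(l_1,\dots,l_n)$ of order $m^2$ is impossibly burnable if $\sum_{i=1}^n B_m(l_i)>m$. *)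

(* Defs.v *)
From mathcomp Require Import all_boot all_order.
Set Implicit Arguments. Unset Strict Implicit. Unset Printing Implicit Defensive.

Section Burning.
Variable T : finType.
Variable e : rel T.

Definition spread (B : {set T}) : {set T} :=
  B :|: [set v | [exists u in B, e u v]].

Definition round (B : {set T}) (o : option T) : {set T} :=
  match o with
  | Some x => x |: spread B
  | None => spread B
  end.

Definition legal_round (B : {set T}) (o : option T) : bool :=
  match o with
  | Some x => x \notin spread B
  | None => spread B == setT
  end.

Fixpoint run_legal (B : {set T}) (os : seq (option T)) : bool :=
  match os with
  | [::] => true
  | o :: os' => legal_round B o && run_legal (round B o) os'
  end.

Definition burned_after (os : seq (option T)) : {set T} :=
  foldl round set0 os.

Definition burns_in (k : nat) : bool :=
  [exists os : k.-tuple (option T),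
     run_legal set0 os && (burned_after os == setT)].

(* Burning number: the least k such that all vertices are burned after k
   rounds.  Such k always exists and is at most #|T|, so searching
   0..#|T| finds the true minimum. *)
Definition burning_number : nat := find burns_in (iota 0 #|T|.+1).

End Burning.

(* Path forest (l_1,...,l_n): vertices are pairs (i, j) with j < l_i;
   (i,j) ~ (i',j') iff i = i' and |j - j'| = 1. *)
Definition pf_vertex (ls : seq nat) : finType :=
  {i : 'I_(size ls) & 'I_(nth 0 ls i)}.

Definition pf_edge (ls : seq nat) : rel (pf_vertex ls) :=
  fun u v => (tag u == tag v) &&
             (((tagged u : nat).+1 == tagged v) || ((tagged v : nat).+1 == tagged u)).

(* B_m(l): least positive t with t = l (mod 2) and l <= 2mt - t^2.
   For l >= 1 any such t lies in (0, 2m), so searching 0..2m is exhaustive. *)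
Definition Bm (m l : nat) : nat :=
  find (fun t => [&& 0 < t, odd t == odd l & l <= 2 * m * t - t ^ 2])
       (iota 0 (2 * m).+1).

Definition impossibly_burnable (m : nat) (ls : seq nat) : Prop :=
  sumn ls = m ^ 2 /\ m < sumn (map (Bm m) ls).

(* Main.v *)
Require Import Defs.
From mathcomp Require Import all_boot all_order.
From mathcomp Require Import zify.

Definition dist (a b : nat) := (a - b) + (b - a).


Lemma count_ball l c r : \sum_(j < l) (dist c j <= r : nat) <= 2 * r + 1.
Proof.
have -> : \sum_(j < l) (dist c j <= r : nat) = \sum_(j < l | dist c j <= r) 1.
  by rewrite [RHS]big_mkcond; apply: eq_bigr => j _; case: (dist c j <= r).
rewrite sum1_card.
pose f (j : 'I_l) : 'I_(2 * r).+1 := inord (j + r - c).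
rewrite -(@card_in_imset _ _ f); last first.
  move=> j1 j2; rewrite /in_mem /= /dist => H1 H2 /(congr1 val).
  rewrite /f /= !inordK; try lia.
  move=> H; apply: val_inj => /=; lia.
by rewrite addn1 -[X in _ <= X](card_ord (2 * r).+1) max_card.
Qed.

Lemma sum_odd k (P : pred 'I_k) (f : 'I_k -> nat) :
  \sum_(t < k | P t) (2 * f t + 1) = 2 * \sum_(t < k | P t) f t + \sum_(t < k | P t) 1.
Proof. by rewrite big_split /= big_distrr. Qed.

Lemma sum_bound k (P : pred 'I_k) :
  \sum_(t < k | P t) (2 * (k.-1 - t) + 1) + (\sum_(t < k | P t) 1) * (\sum_(t < k | P t) 1)
   <= 2 * k * (\sum_(t < k | P t) 1) /\ \sum_(t < k | P t) 1 <= k.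
Proof.
elim: k P => [|k IH] P; first by rewrite !big_ord0.
have Hc : \sum_(t < k.+1 | P t) 1 = (P ord0 : nat) + \sum_(i < k | P (lift ord0 i)) 1.
  by rewrite big_mkcond big_ord_recl -big_mkcond /=; case: (P ord0).
rewrite Hc big_mkcond big_ord_recl -big_mkcond /=.
have [H1 H2] := IH (fun t => P (lift ord0 t)).
have -> : \sum_(i < k | P (lift ord0 i)) (2 * (k.+1.-1 - lift ord0 i) + 1)
   = \sum_(i < k | P (lift ord0 i)) (2 * (k.-1 - i) + 1).
  apply: eq_bigr => i _; rewrite /= /bump /=.
  have := ltn_ord i; lia.
set S := \sum_(i < k | _) (2 * _ + 1) in H1 *.
set c := \sum_(i < k | _) 1 in H1 H2 *.
case: (P ord0) => /=; nia.
Qed.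

Section PF.
Variable ls : seq nat.
Local Notation T := (pf_vertex ls).
Local Notation E := (@pf_edge ls).

Lemma cover (os : seq (option T)) (v : T) :
  v \in foldl (round E) set0 os ->
  exists t x, [/\ t < size os, nth None os t = Some x, tag x = tag v &
     dist (tagged x) (tagged v) <= (size os).-1 - t].
Proof.
elim/last_ind: os v => [|s o IH] v; first by rewrite /= inE.
rewrite foldl_rcons size_rcons /=.
have Hsp : v \in spread E (foldl (round E) set0 s) ->
  exists t x, [/\ t < (size s).+1, nth None (rcons s o) t = Some x, tag x = tag v &
     dist (tagged x) (tagged v) <= (size s) - t].
  rewrite /spread !inE => /orP [/IH [t [x [H1 H2 H3 H4]]]|].
    exists t, x; split => //; first by lia.
      by rewrite nth_rcons H1.
    by move: H4; rewrite /dist; lia.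
  move=> /existsP [u /andP [/IH [t [x [H1 H2 H3 H4]]] He]].
  move: He; rewrite /pf_edge => /andP [/eqP Htag Hadj].
  exists t, x; split => //; first by lia.
    by rewrite nth_rcons H1.
    by rewrite H3.
  move: H4 Hadj; rewrite /dist => H4 /orP [/eqP Ha|/eqP Ha]; lia.
case: o Hsp => [x|] Hsp /=.
  rewrite in_setU1 => /orP [/eqP ->|Hv]; last exact: Hsp.
  exists (size s), x; split => //.
    by rewrite nth_rcons ltnn eqxx.
  by rewrite /dist !subnn.
exact: Hsp.
Qed.

Section Run.
Variable k : nat.
Variable os : seq (option T).
Hypothesis Hsize : size os = k.
Hypothesis Hall : forall v : T, v \in foldl (round E) set0 os.

Definition Pt (i : 'I_(size ls)) (t : 'I_k) : bool :=
  if nth None os t is Some x then tag x == i else false.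
Definition ct (t : 'I_k) : nat :=
  if nth None os t is Some x then val (tagged x) else 0.

Lemma path_bound (i : 'I_(size ls)) : nth 0 ls i <= \sum_(t < k | Pt i t) (2 * (k.-1 - t) + 1).
Proof.
have -> : nth 0 ls i = \sum_(j < nth 0 ls i) 1 by rewrite sum_nat_const card_ord muln1.
apply: (@leq_trans (\sum_(j < nth 0 ls i) \sum_(t < k | Pt i t) (dist (ct t) j <= k.-1 - t : nat))).
  apply: leq_sum => j _.
  have [t [x [H1 H2 H3 H4]]] := @cover os _ (Hall (Tagged (fun i : 'I_(size ls) => 'I_(nth 0 ls i)) j : T)).
  have Ht : t < k by rewrite -Hsize.
  rewrite (bigD1 (Ordinal Ht)) /=; last by rewrite /Pt /= H2 H3 eqxx.
  rewrite /ct /= H2.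
  suff -> : dist (tagged x) j <= k.-1 - t by [].
  by rewrite -Hsize.
rewrite exchange_big; apply: leq_sum => t _; exact: count_ball.
Qed.

Lemma exch (F : 'I_k -> nat) :
  \sum_(i < size ls) \sum_(t < k | Pt i t) F t <= \sum_(t < k) F t.
Proof.
under eq_bigr => i _ do rewrite big_mkcond.
rewrite exchange_big; apply: leq_sum => t _.
rewrite -big_mkcond /Pt; case: (nth None os t) => [x|]; last by rewrite big_pred0.
by rewrite (big_pred1 (tag x)) // => y /=; rewrite eq_sym.
Qed.
End Run.
End PF.

Lemma sumn_nth (f : nat -> nat) (s : seq nat) :
  sumn (map f s) = \sum_(i < size s) f (nth 0 s i).
Proof. by rewrite sumnE big_map (big_nth 0) big_mkord. Qed.

Lemma sum_le_eq n (a b : 'I_n -> nat) M : (forall i, a i <= b i) ->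
  \sum_(i < n) b i <= M -> \sum_(i < n) a i = M -> forall i, b i <= a i.
Proof.
move=> Hab Hb Ha i.
rewrite (bigD1 i) //= in Hb; rewrite (bigD1 i) //= in Ha.
move: Hb Ha.
have : \sum_(j < n | j != i) a j <= \sum_(j < n | j != i) b j by apply: leq_sum.
move=> H1 H2 H3; rewrite -(leq_add2r (\sum_(j < n | j != i) b j)).
apply: (leq_trans H2); rewrite -H3 leq_add2l; exact: H1.
Qed.

Lemma Bm_le m l c : 0 < c -> odd c = odd l -> l + c * c <= 2 * m * c -> c <= 2 * m ->
  Bm m l <= c.
Proof.
move=> Hc Ho Hl Hcm; rewrite /Bm.
case: (leqP (find _ _) c) => // Hlt.
have := before_find 0 Hlt; rewrite nth_iota; last by lia.
rewrite add0n Hc Ho eqxx /= -mulnn.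
have -> // : l <= 2 * m * c - c * c by lia.
Qed.

Lemma card_pf ls : #|pf_vertex ls| = sumn ls.
Proof.
rewrite card_tagged sumnE big_map big_enum /=.
under eq_bigr => i _ do rewrite card_ord.
by rewrite -(sumn_nth id) map_id.
Qed.

Lemma key m ls k : all (fun l => 0 < l) ls -> sumn ls = m ^ 2 -> k <= m ->
  burns_in (@pf_edge ls) k -> sumn (map (Bm m) ls) <= k.
Proof.
move=> Hpos Hsum Hkm /existsP [os /andP [_ /eqP Hb]].
have Hall : forall v, v \in foldl (round (@pf_edge ls)) set0 os.
  by move=> v; change (v \in burned_after (@pf_edge ls) os); rewrite Hb inE.
have Hsize : size os = k by rewrite size_tuple.
set S := fun i => \sum_(t < k | @Pt ls k os i t) (2 * (k.-1 - t) + 1).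
set c := fun i => \sum_(t < k | @Pt ls k os i t) 1.
have HS : \sum_(i < size ls) S i <= k * k.
  have E1 := @exch ls k os (fun t : 'I_k => 2 * (k.-1 - t) + 1).
  apply: leq_trans E1 _.
  have [H1 _] := @sum_bound k (fun _ : 'I_k => true).
  move: H1; rewrite sum_nat_const card_ord muln1 => H1.
  nia.
have Hl : \sum_(i < size ls) nth 0 ls i = m * m by rewrite -(sumn_nth id) map_id Hsum mulnn.
have Hpb := @path_bound ls k os Hsize Hall.
have Heq : forall i, S i <= nth 0 ls i.
  apply: (@sum_le_eq _ (fun i => nth 0 ls i) S (m * m)) => //.
  by apply: leq_trans HS _; apply: leq_mul.
apply: (@leq_trans (\sum_(i < size ls) c i)).
  rewrite sumn_nth; apply: leq_sum => i _.
  have Hli := Hpb i.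
  have Hei : \sum_(t < k | Pt ls k os i t) (2 * (k.-1 - t) + 1) <= nth 0 ls i := Heq i.
  have [B1 B2] := @sum_bound k (@Pt ls k os i).
  have Hp : 0 < nth 0 ls i by apply: (allP Hpos); apply: mem_nth.
  rewrite /c /=.
  set Sx := \sum_(t < k | Pt ls k os i t) (2 * (k.-1 - t) + 1) in Hli Hei B1 *.
  set cx := \sum_(t < k | Pt ls k os i t) 1 in B1 B2 *.
  have Hodd : odd Sx = odd cx by rewrite /Sx /cx sum_odd oddD oddM /=.
  have HSx : nth 0 ls i = Sx by apply/eqP; rewrite eqn_leq Hli Hei.
  clearbody Sx cx.
  apply: Bm_le.
  - nia.
  - by rewrite HSx Hodd.
  - nia.
  - lia.
apply: leq_trans (@exch ls k os (fun _ => 1)) _.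
by rewrite sum_nat_const card_ord muln1.
Qed.

Theorem mainTheorem2 (m : nat) (ls : seq nat) :
  all (fun l => 0 < l) ls ->
  impossibly_burnable m ls ->
  m < @burning_number (pf_vertex ls) (@pf_edge ls).
Proof.
move=> Hpos [Hsum Hlt]; rewrite /burning_number.
case: (leqP (find _ _) m) => // Hle; exfalso.
have Hcard : m < (#|pf_vertex ls|).+1 by rewrite card_pf Hsum; nia.
have Hhas : has (burns_in (@pf_edge ls)) (iota 0 #|pf_vertex ls|.+1).
  by rewrite has_find size_iota; lia.
have := nth_find 0 Hhas; rewrite nth_iota; last by move: Hhas; rewrite has_find size_iota.
rewrite add0n => /(@key m ls _ Hpos Hsum Hle); lia.
Qed.
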